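(* Let $(L,\le,(\sqsubseteq_\alpha)_{\alpha<\kappa})$ be a model of Axioms 1–4 with $\kappa$ a limit ordinal. Let $x\in L$, $\alpha<\kappa$, and let $y=x|_\alpha=\bigsqcup_\alpha\{x\}$. Then $y\in[x]_\alpha$. Moreover, $y$ is the $\le$-least element of $[x]_\alpha$, and $y\sqsubseteq_{\alpha+1}z$ for every $z\in[x]_\alpha$.
   Context: Setting (model of Axioms 1–4). Let $(L,\le)$ be a complete lattice with join operation $\bigvee$ and least element $\perp$. Let $\kappa>0$ be an ordinal, and for each ordinal $\alpha<\kappa$ let $\sqsubseteq_\alpha$ be a preorder on $L$. Derived relations: - $x=_\alpha y$ means $x\sqsubseteq_\alpha y$ and $y\sqsubseteq_\alpha x$. - $x\sqsubset_\alpha y$ means $x\sqsubseteq_\alpha y$ and not $x=_\alpha y$. Derived sets, for $x\in L$ and $\alpha<\kappa$: - $(x]_\alpha=\{y\in L:\forall\beta<\alpha,\ x=_\beta y\}$. - $[x]_\alpha=\{y\in L: x=_\alpha y\}$. For a set $X$, $X\sqsubseteq_\alpha y$ means $x\sqsubseteq_\alpha y$ for all $x\in X$. The structure is a model of Axioms 1–4 if: - (A1) for all $\alpha<\beta<\kappa$, $x\sqsubseteq_\beta y$ implies $x=_\alpha y$; - (A2) $\bigcap_{\alpha<\kappa}=_\alpha$ is the identity relation on $L$; - (A3) for every $x\in L$, every $\alpha<\kappa$ and every $X\subseteq(x]_\alpha$ there is $y\in(x]_\alpha$ with $X\sqsubseteq_\alpha y$ such that for all $z\in(x]_\alpha$ with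 $X\sqsubseteq_\alpha z$ we have $y\sqsubseteq_\alpha z$ and $y\le z$; - (A4) for every nonempty $X\subseteq L$, every $\alpha<\kappa$ and every $y\in L$, if $y=_\alpha x$ for all $x\in X$ then $y=_\alpha\bigvee X$. The element $y$ of (A3) is unique and is denoted $\bigsqcup_\alpha X$. The slice of $x$ at $\alpha$ is $x|_\alpha:=\bigsqcup_\alpha\{x\}$, where $\{x\}\subseteq(x]_\alpha$. *)

(* Defs.v *)
From Stdlib Require Import Relations Wellfounded.

Set Implicit Arguments.

Definition is_lub {L : Type} (le : L -> L -> Prop) (X : L -> Prop) (s : L) : Prop :=
  (forall x, X x -> le x s) /\ (forall u, (forall x, X x -> le x u) -> le s u).

Definition complete_lattice {L : Type} (le : L -> L -> Prop)
  (join : (L -> Prop) -> L) : Prop :=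
  (forall x, le x x) /\
  (forall x y z, le x y -> le y z -> le x z) /\
  (forall x y, le x y -> le y x -> x = y) /\
  (forall X, is_lub le X (join X)).

(** * Ordinals: the ordinals below kappa are modelled by a type I with a strict
    well-order lt (every well-order is isomorphic to a unique ordinal). *)
Definition strict_well_order {I : Type} (lt : I -> I -> Prop) : Prop :=
  (forall a, ~ lt a a) /\
  (forall a b c, lt a b -> lt b c -> lt a c) /\
  (forall a b, lt a b \/ a = b \/ lt b a) /\
  well_founded lt.

(** kappa is a limit ordinal: kappa > 0 and for every alpha < kappa, alpha+1 < kappa *)
Definition limit_order {I : Type} (lt : I -> I -> Prop) : Prop :=
  inhabited I /\ (forall a, exists b, lt a b).

Definition is_succ {I : Type} (lt : I -> I -> Prop) (a b : I) : Prop :=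
  lt a b /\ (forall c, lt a c -> c = b \/ lt b c).

Section Derived.
Variables (I L : Type) (lt : I -> I -> Prop) (sq : I -> L -> L -> Prop).

Definition eqa (a : I) (x y : L) : Prop := sq a x y /\ sq a y x.

Definition lower_class (x : L) (a : I) (y : L) : Prop :=
  forall b, lt b a -> eqa b x y.

Definition class (x : L) (a : I) (y : L) : Prop := eqa a x y.

Definition set_sq (a : I) (X : L -> Prop) (y : L) : Prop :=
  forall x, X x -> sq a x y.
End Derived.

(** y is the element provided by Axiom 3 for x, a, X  (i.e. y = ⊔_a X) *)
Definition is_bsup {I L : Type} (lt : I -> I -> Prop) (sq : I -> L -> L -> Prop)
  (le : L -> L -> Prop) (x : L) (a : I) (X : L -> Prop) (y : L) : Prop :=
  lower_class lt sq x a y /\ set_sq sq a X y /\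
  (forall z, lower_class lt sq x a z -> set_sq sq a X z -> sq a y z /\ le y z).

Definition model_A1_4 {I L : Type} (lt : I -> I -> Prop) (le : L -> L -> Prop)
  (join : (L -> Prop) -> L) (sq : I -> L -> L -> Prop) : Prop :=
  complete_lattice le join /\
  strict_well_order lt /\
  inhabited I /\
  (forall a, (forall x, sq a x x) /\ (forall x y z, sq a x y -> sq a y z -> sq a x z)) /\
  (forall a b x y, lt a b -> sq b x y -> eqa sq a x y) /\
  (forall x y, (forall a, eqa sq a x y) -> x = y) /\
  (forall x a (X : L -> Prop), (forall w, X w -> lower_class lt sq x a w) ->
     exists y, is_bsup lt sq le x a X y) /\
  (forall (X : L -> Prop) a y, (exists w, X w) ->
     (forall w, X w -> eqa sq a y w) -> eqa sq a y (join X)).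

(* Main.v *)
Require Import Defs.

Theorem mainTheorem6 (I L : Type) (lt : I -> I -> Prop) (le : L -> L -> Prop)
  (join : (L -> Prop) -> L) (sq : I -> L -> L -> Prop) :
  model_A1_4 lt le join sq ->
  limit_order lt ->
  forall (x : L) (a : I) (y : L),
    is_bsup lt sq le x a (fun w => w = x) y ->   (* y = x|_a = ⊔_a {x} *)
    class sq x a y /\
    (forall z, class sq x a z -> le y z) /\
    (forall b, is_succ lt a b -> forall z, class sq x a z -> sq b y z).
Proof.
  intros [[Hrefl [Htr [Hanti Hlub]]] [[Hirr [Hltt [Htri Hwf]]] [_ [Hpre [A1 [A2 [A3 A4]]]]]]] _ x a y [Hyl [Hys Hymin]].
  assert (Hxx : lower_class lt sq x a x).
  { intros c _. split; apply (Hpre c). }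
  assert (C1 : class sq x a y).
  { split. apply Hys; reflexivity.
    apply (Hymin x Hxx). intros w ->; apply (Hpre a). }
  assert (C2 : forall z, class sq x a z -> le y z).
  { intros z [Hxz Hzx]. apply (Hymin z).
    - intros c Hc. exact (A1 c a x z Hc Hxz).
    - intros w ->. exact Hxz. }
  split; [exact C1|split; [exact C2|]].
  intros b [Hab Hsucc] z Hz.
  assert (Hlow : forall v, class sq x a v -> lower_class lt sq x b v).
  { intros v [Hxv Hvx] c Hc.
    destruct (Htri c a) as [H|[H|H]].
    - exact (A1 c a x v H Hxv).
    - subst; split; assumption.
    - destruct (Hsucc c H) as [->|H']; exfalso; [apply (Hirr b Hc)|apply (Hirr b (Hltt _ _ _ H' Hc))]. }
  destruct (A3 x b (fun _ => False)) as [w [Hwl [_ Hwmin]]].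
  { intros w []. }
  assert (Hwc : class sq x a w) by exact (Hwl a Hab).
  assert (Hyw : y = w).
  { apply Hanti.
    - exact (C2 w Hwc).
    - apply (Hwmin y (Hlow y C1)). intros v []. }
  subst w. apply (Hwmin z (Hlow z Hz)). intros v [].
Qed.
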